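(* Let $Q=\sum_{j=1}^n q_j(z)\partial/\partial z_j$ be a weighted homogeneous holomorphic polynomial vector field on $\mathbb{C}^n$ with $Q(0)=0$, and suppose $S$ is a nontrivial orbit of $Q$ with $0\in\bar S$ and $Q\neq0$ on $S$. Let $\nu$ be a real number and $\alpha$ a positive integer. If $Q^\alpha p^{(\nu)}=0$ on $\mathbb{C}^n$, then $p^{(\nu)}|_S=0$.
   Context: Weights $\delta_j=1/(2m_j)$ ($m_j$ positive integers) on $z_1,\dots,z_n$; $\mathrm{wt}(z^J)=\sum j_k\delta_k$, $\mathrm{wt}(z^A\bar z^B)=\mathrm{wt}\,A+\mathrm{wt}\,B$; a polynomial or vector field is homogeneous of weight $\mu$ if all monomials of the polynomial (resp. of $q_j$) have weight $\mu$ (resp. $\mu-\delta_j$). Standing assumption: $p(z,\bar z)=\sum c_{A,B}z^A\bar z^B$ is a real polynomial, homogeneous of weight 1, containing no purely holomorphic or purely antiholomorphic monomials ($c_{A,B}\ne0\Rightarrow A\ne0,B\neq0$). The signature of $z^A\bar z^B$ is $\mathrm{wt}\,A-\mathrm{wt}\,B$, and $p^{(\nu)}=\sum_{\mathrm{wt}A-\mathrm{wt}B=\nu}c_{A,B}z^A\bar z^B=\sum_B f_{\nu,B}(z)\bar z^B$ with $f_{\nu,B}$ holomorphic polynomials. $Q$ acts on polynomials in $z,\bar z$ by differentiation in $z$ only: $Q(f\bar z^B)=(Qf)\bar z^B$. An orbit of $Q$ is the image $\varphi(\mathcal{D})$ of an integral curve $\varphi:\mathcal{D}\to\mathbb{C}^n$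 ($\dot\varphi=Q(\varphi)$) on a maximal domain $\mathcal{D}\subset\mathbb{C}$. *)

(* Defs.v *)
From HB Require Import structures.
From mathcomp Require Import all_boot all_order all_algebra.
From mathcomp Require Import complex.
From mathcomp Require Import all_classical all_reals all_analysis.
From mathcomp Require mpoly.
Import (canonicals, coercions) mpoly.
Set Implicit Arguments. Unset Strict Implicit. Unset Printing Implicit Defensive.
Import Order.TTheory GRing.Theory Num.Theory.
Import numFieldNormedType.Exports.
Local Open Scope classical_set_scope.
Local Open Scope ring_scope.

(* the complex numbers C = R[i], seen as a numClosedFieldType so that the
   normed-space (topology, derivative) instances of mathcomp-analysis apply *)
Definition CC (R : realType) : numClosedFieldType := R[i].

Section Defs.
Variables (R : realType) (n : nat).
Local Notation C := (CC R).
Local Notation hpoly := (mpoly.mpoly n C).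
(* polynomials in z_1..z_n, zbar_1..zbar_n: variable lshift n i is z_i,
   variable rshift n i is zbar_i *)
Local Notation zpoly := (mpoly.mpoly (n + n) C).

Definition delta (m : 'I_n -> nat) (j : 'I_n) : R := ((2 * m j)%N%:R)^-1.

Definition wt (m : 'I_n -> nat) (J : mpoly.multinom n) : R :=
  \sum_(k < n) (J k)%:R * delta m k.

Definition wtz (m : 'I_n -> nat) (AB : mpoly.multinom (n + n)) : R :=
  \sum_(k < n) (AB (lshift n k))%:R * delta m k.
Definition wtzb (m : 'I_n -> nat) (AB : mpoly.multinom (n + n)) : R :=
  \sum_(k < n) (AB (rshift n k))%:R * delta m k.

Definition vf_homogeneous (m : 'I_n -> nat) (Q : 'I_n -> hpoly) (mu : R) :=
  forall j (J : mpoly.multinom n), J \in mpoly.msupp (Q j) -> wt m J = mu - delta m j.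

Definition weighted_homogeneous_vf (m : 'I_n -> nat) (Q : 'I_n -> hpoly) :=
  exists mu : R, vf_homogeneous m Q mu.

Definition heval (f : hpoly) (z : 'rV[C]_n) : C := mpoly.meval (fun i => z ord0 i) f.

Definition Qvec (Q : 'I_n -> hpoly) (z : 'rV[C]_n) : 'rV[C]_n :=
  \row_j heval (Q j) z.

Definition zeval (p : zpoly) (z : 'rV[C]_n) : C :=
  mpoly.meval (fun k => match @fintype.split n n k with
                        | inl i => z ord0 i
                        | inr i => (z ord0 i)^* end) p.

Definition liftz (f : hpoly) : zpoly :=
  mpoly.mmap (@mpoly.mpolyC (n + n) C)
    (fun i => mpoly.mpolyX C (mpoly.mnm1 (lshift n i))) f.

Definition Qact (Q : 'I_n -> hpoly) (p : zpoly) : zpoly :=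
  \sum_(j < n) liftz (Q j) * mpoly.mderiv (lshift n j) p.

Definition real_poly (p : zpoly) := forall z : 'rV[C]_n, zeval p z \is Num.real.
Definition homogeneous_wt1 (m : 'I_n -> nat) (p : zpoly) :=
  forall AB, AB \in mpoly.msupp p -> wtz m AB + wtzb m AB = 1.
Definition no_pure_terms (p : zpoly) :=
  forall AB : mpoly.multinom (n + n), AB \in mpoly.msupp p ->
    (exists i, AB (lshift n i) != 0%N) /\ (exists i, AB (rshift n i) != 0%N).

Definition psig (m : 'I_n -> nat) (p : zpoly) (nu : R) : zpoly :=
  \sum_(AB <- mpoly.msupp p | wtz m AB - wtzb m AB == nu)
     mpoly.mcoeff AB p *: mpoly.mpolyX C AB.

Definition integral_curve (Q : 'I_n -> hpoly) (D : set C) (phi : C -> 'rV[C]_n) :=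
  [/\ open D, connected D, D !=set0 &
      forall t, D t -> is_derive t (1 : C) phi (Qvec Q (phi t))].

Definition maximal_integral_curve (Q : 'I_n -> hpoly) (D : set C) (phi : C -> 'rV[C]_n) :=
  integral_curve Q D phi /\
  forall (D' : set C) (psi : C -> 'rV[C]_n), integral_curve Q D' psi ->
    D `<=` D' -> (forall t, D t -> phi t = psi t) -> D' `<=` D.

Definition Qorbit (Q : 'I_n -> hpoly) (S : set 'rV[C]_n) :=
  exists (D : set C) (phi : C -> 'rV[C]_n),
    maximal_integral_curve Q D phi /\ S = phi @` D.

Definition nontrivial (S : set 'rV[C]_n) := ~ exists x, S = [set x].

End Defs.

(* Main.v *)
Require Import Defs.
From HB Require Import structures.
From mathcomp Require Import all_boot all_order all_algebra.
From mathcomp Require Import complex.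
From mathcomp Require Import all_classical all_reals all_analysis.
From mathcomp Require mpoly.
From mathcomp Require Import ring lra.
Import (canonicals, coercions) mpoly.
Import Order.TTheory GRing.Theory Num.Theory.
Import numFieldNormedType.Exports.
Local Open Scope classical_set_scope.
Local Open Scope ring_scope.
Set Implicit Arguments. Unset Strict Implicit. Unset Printing Implicit Defensive.
Section S.
Variables (R : realType) (n : nat).
Local Notation C := (CC R).

Lemma is_derive_cvg (V W : normedModType C) (f : V -> W) x v l :
  (fun h : C => h^-1 *: ((f \o shift x) (h *: v) - f x)) @ 0^' --> l -> is_derive x v f l.
Proof. move=> H; apply: DeriveDef; [apply/cvg_ex; exists l; exact H | exact: cvg_lim H]. Qed.

Lemma is_derive_coord (g : C -> 'rV[C]_n) t d j :
  is_derive t (1:C) g d -> is_derive t (1:C) (fun s => g s ord0 j) (d ord0 j).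
Proof.
move=> [dg <-]; apply: is_derive_cvg.
have H := dg; move/cvg_ex: H => [l Hl].
have -> : 'D_1 g t = l by exact: cvg_lim Hl.
have := cvg_comp _ _ Hl (@coord_continuous C 1 n ord0 j l).
apply: cvg_trans; apply: near_eq_cvg; near=> h.
by rewrite /= !mxE.
Unshelve. all: by end_near. Qed.
End S.

Section S.
Variables (R : realType) (n : nat).
Local Notation C := (CC R).
Local Notation zpoly := (mpoly.mpoly (n + n) C).

Definition ev (x w : 'rV[C]_n) : 'I_(n+n) -> C :=
  fun k => match @fintype.split n n k with
                        | inl i => x ord0 i
                        | inr i => (w ord0 i)^* end.
Definition E (w : 'rV[C]_n) (P : zpoly) (x : 'rV[C]_n) : C := mpoly.meval (ev x w) P.

Lemma is_derive_eqd (V W : normedModType C) (f : V -> W) x v d d' :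
  is_derive x v f d -> d = d' -> is_derive x v f d'.
Proof. by move=> H <-. Qed.

Variables (w : 'rV[C]_n) (g : C -> 'rV[C]_n) (t : C) (d : 'rV[C]_n).
Hypothesis gd : forall j, is_derive t (1:C) (fun s => g s ord0 j) (d ord0 j).

Definition Dv (P : zpoly) := \sum_(j < n) d ord0 j * E w (mpoly.mderiv (lshift n j) P) (g t).
Definition Pr (P : zpoly) := is_derive t (1:C) (fun s => E w P (g s)) (Dv P).

Lemma Pr_C c : Pr (mpoly.mpolyC _ c).
Proof.
rewrite /Pr.
have -> : (fun s => E w (mpoly.mpolyC _ c) (g s)) = cst c.
  by apply/funext => s; rewrite /E mpoly.mevalC.
have H0 : is_derive t (1:C) (cst c) (0:C) by exact: is_derive_cst.
apply: (is_derive_eqd H0).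
rewrite /Dv big1 // => j _.
by rewrite mpoly.mderivC /E mpoly.meval0 mulr0.
Qed.

Lemma Pr_D P Q : Pr P -> Pr Q -> Pr (P + Q).
Proof.
rewrite /Pr => HP HQ.
have -> : (fun s => E w (P + Q) (g s)) = (fun s => E w P (g s)) + (fun s => E w Q (g s)).
  by apply/funext => s; rewrite /E mpoly.mevalD.
apply: (is_derive_eqd (is_deriveD HP HQ)).
rewrite /Dv -big_split /=; apply: eq_bigr => j _.
by rewrite mpoly.mderivD /E mpoly.mevalD mulrDr.
Qed.

Lemma Pr_M P Q : Pr P -> Pr Q -> Pr (P * Q).
Proof.
rewrite /Pr => HP HQ.
have -> : (fun s => E w (P * Q) (g s)) = (fun s => E w P (g s)) * (fun s => E w Q (g s)).
  by apply/funext => s; rewrite /E mpoly.mevalM.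
apply: (is_derive_eqd (is_deriveM HP HQ)).
rewrite /Dv /= !scaler_sumr -big_split /=; apply: eq_bigr => j _.
rewrite mpoly.mderivM /E mpoly.mevalD !mpoly.mevalM /GRing.scale /=.
ring.
Qed.

Lemma Pr_X k : Pr (mpoly.mpolyX C (mpoly.mnm1 k)).
Proof.
rewrite /Pr.
have Hd j : E w (mpoly.mderiv (lshift n j) (mpoly.mpolyX C (mpoly.mnm1 k))) (g t)
    = (k == lshift n j)%:R.
  rewrite mpoly.mderivX /E mpoly.mevalZ mpoly.mnm1E.
  have [->|] := eqVneq k (lshift n j); last by rewrite mul0r.
  by rewrite -{1}[mpoly.mnm1 _]mpoly.add0m mpoly.addmK mpoly.mpolyX0 mpoly.meval1 mulr1.
move: Hd; rewrite -(splitK k); case: (fintype.split k) => i /= Hd.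
- have -> : (fun s => E w (mpoly.mpolyX C (mpoly.mnm1 (lshift n i))) (g s)) = (fun s => g s ord0 i).
    by apply/funext => s; rewrite /E mpoly.mevalXU /ev /= (unsplitK (inl _ i)).
  apply: (is_derive_eqd (gd i)).
  rewrite /Dv (bigD1 i) //= big1 ?addr0 => [|j ji]; rewrite Hd.
    by rewrite eqxx mulr1.
  by rewrite (inj_eq (@lshift_inj _ _)) eq_sym (negbTE ji) mulr0.
- have -> : (fun s => E w (mpoly.mpolyX C (mpoly.mnm1 (rshift n i))) (g s)) = cst ((w ord0 i)^*).
    by apply/funext => s; rewrite /E mpoly.mevalXU /ev /= (unsplitK (inr _ i)).
  have H0 : is_derive t (1:C) (cst ((w ord0 i)^*)) (0:C) by exact: is_derive_cst.
  apply: (is_derive_eqd H0).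
  rewrite /Dv big1 // => j _; rewrite Hd.
  by rewrite eq_sym eq_lrshift mulr0.
Qed.


Lemma Pr_all P : Pr P.
Proof.
rewrite (mpoly.mpolyE P); apply: (big_ind Pr).
- by have := Pr_C 0; rewrite mpoly.mpolyC0.
- exact: Pr_D.
move=> m _; rewrite -mpoly.mul_mpolyC; apply: Pr_M; first exact: Pr_C.
rewrite mpoly.mpolyXE_id; apply: (big_ind Pr).
- by have := Pr_C 1; rewrite mpoly.mpolyC1.
- exact: Pr_M.
move=> i _; elim: (m i) => [|k IH].
  by rewrite expr0; have := Pr_C 1; rewrite mpoly.mpolyC1.
by rewrite exprS; apply: Pr_M; [exact: Pr_X | exact: IH].
Qed.
End S.


Section Cont.
Variables (R : realType) (n : nat).
Local Notation C := (CC R).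
Local Notation zpoly := (mpoly.mpoly (n + n) C).
Variables (w : 'rV[C]_n) (x0 : 'rV[C]_n).
Definition Pc (P : zpoly) := {for x0, continuous (E w P)}.

Lemma Pc_all P : Pc P.
Proof.
have PcC c : Pc (mpoly.mpolyC _ c).
  rewrite /Pc; have -> : E w (mpoly.mpolyC _ c) = cst c.
    by apply/funext => s; rewrite /E mpoly.mevalC.
  exact: (@cst_continuous _ _ c x0).
have PcD p q : Pc p -> Pc q -> Pc (p + q).
  rewrite /Pc => Hp Hq; have -> : E w (p + q) = E w p + E w q.
    by apply/funext => s; rewrite /E mpoly.mevalD.
  exact: (@continuousD C C _ (E w p) (E w q) x0 Hp Hq).
have PcM p q : Pc p -> Pc q -> Pc (p * q).
  rewrite /Pc => Hp Hq; have -> : E w (p * q) = E w p \* E w q.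
    by apply/funext => s; rewrite /E mpoly.mevalM.
  exact: (@continuousM C _ (E w p) (E w q) x0 Hp Hq).
have PcX k : Pc (mpoly.mpolyX C (mpoly.mnm1 k)).
  rewrite /Pc -(splitK k); case: (fintype.split k) => i /=.
  - have -> : E w (mpoly.mpolyX C (mpoly.mnm1 (lshift n i))) = (fun s => s ord0 i).
      by apply/funext => s; rewrite /E mpoly.mevalXU /ev /= (unsplitK (inl _ i)).
    exact: (@coord_continuous C 1 n ord0 i x0).
  - have -> : E w (mpoly.mpolyX C (mpoly.mnm1 (rshift n i))) = cst ((w ord0 i)^*).
      by apply/funext => s; rewrite /E mpoly.mevalXU /ev /= (unsplitK (inr _ i)).
    exact: (@cst_continuous _ _ ((w ord0 i)^*) x0).
rewrite (mpoly.mpolyE P); apply: (big_ind Pc).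
- by have := PcC 0; rewrite mpoly.mpolyC0.
- exact: PcD.
move=> m _; rewrite -mpoly.mul_mpolyC; apply: (PcM); first exact: PcC.
rewrite mpoly.mpolyXE_id; apply: (big_ind Pc).
- by have := PcC 1; rewrite mpoly.mpolyC1.
- exact: PcM.
move=> i _; elim: (m i) => [|k IH].
  by rewrite expr0; have := PcC 1; rewrite mpoly.mpolyC1.
by rewrite exprS; apply: (PcM); [exact: PcX | exact: IH].
Qed.
End Cont.

Lemma is_derive_cvgK (K : numFieldType) (V W : normedModType K) (f : V -> W) x v l :
  (fun h : K => h^-1 *: ((f \o shift x) (h *: v) - f x)) @ 0^' --> l -> is_derive x v f l.
Proof. move=> H; apply: DeriveDef; [apply/cvg_ex; exists l; exact H | exact: cvg_lim H]. Qed.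

Section Real.
Variables (R : realType).
Local Notation C := (CC R).
Local Open Scope complex_scope.

Lemma normC_real (h : R) : `|(h%:C : C)| = `|h|%:C.
Proof. by rewrite normc_def /= expr0n addr0 sqrtr_sqr. Qed.

Lemma RC_cont (h0 : R) : (fun h : R => (h%:C : C)) @ h0 --> (h0%:C : C).
Proof.
apply/cvgrPdist_lt => e e0.
have ereal : e \is Num.real by exact: gtr0_real.
have e0' : 0 < complex.Re e by rewrite -ltcR RRe_real.
near=> h.
rewrite -rmorphB normC_real -(RRe_real ereal) ltcR.
by near: h; exact: (@cvgr_dist_lt _ _ _ (nbhs h0) _ id h0 cvg_id _ e0').
Unshelve. all: by end_near. Qed.


Lemma Re_le (z : C) : `|complex.Re z| <= complex.Re `|z|.
Proof.
rewrite normc_def /= -sqrtr_sqr; apply: ler_wsqrtr.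
by rewrite lerDl sqr_ge0.
Qed.
Lemma Im_le (z : C) : `|complex.Im z| <= complex.Re `|z|.
Proof.
rewrite normc_def /= -sqrtr_sqr; apply: ler_wsqrtr.
by rewrite lerDr sqr_ge0.
Qed.

Lemma L_cont (L : C -> R) : (forall z z', L (z - z') = L z - L z') ->
  (forall z, `|L z| <= complex.Re `|z|) -> continuous L.
Proof.
move=> LB Lle z0; apply/(@cvgrPdist_lt _ _ _ _ (nbhs_filter (z0 : C))) => e e0.
have e0' : 0 < (e%:C : C) by rewrite ltcR.
exists (e%:C) => // z /= Hz.
rewrite -LB; apply: (le_lt_trans (Lle _)).
have : `|z0 - z| \is Num.real by exact: normr_real.
by move/RRe_real => H; move: Hz; rewrite -H ltcR.
Qed.

Lemma Re_cont : continuous (fun z : C => complex.Re z).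
Proof.
apply: L_cont; last exact: Re_le.
by move=> [a b] [c d].
Qed.
Lemma Im_cont : continuous (fun z : C => complex.Im z).
Proof.
apply: L_cont; last exact: Im_le.
by move=> [a b] [c d].
Qed.

Lemma real_deriv (L : C -> R) (Lc : continuous L)
  (LB : forall z z', L (z - z') = L z - L z')
  (LZ : forall (h : R) z, L (h%:C * z) = h * L z)
  (F : C -> C) (a u : C) (s : R) :
  derivable F (a + s%:C * u) 1 ->
  is_derive s (1:R) (fun r : R => L (F (a + r%:C * u))) (L (u * 'D_1 F (a + s%:C * u))).
Proof.
move=> dF; set x := a + s%:C * u.
have L0 : L 0 = 0 by have := LB 0 0; rewrite subrr => ->; rewrite subrr.
apply: is_derive_cvgK.
have [u0|u0] := eqVneq u 0.
  rewrite u0 mul0r L0.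
  have -> : (fun h : R => h^-1 *: (((fun r : R => L (F (a + r%:C * 0))) \o shift s) (h *: 1) -
       L (F (a + s%:C * 0)))) = cst 0.
    by apply/funext => h /=; rewrite !mulr0 subrr scaler0.
  exact: cvg_cst.
have Hq : (fun k : C => k^-1 *: ((F \o shift x) (k *: 1) - F x)) @ 0^' --> 'D_1 F x.
  exact: dF.
have Hc : (fun h : R => (h%:C : C) * u) @ (0:R) --> (0:C).
  have := @continuousM C R (fun h : R => (h%:C : C)) (cst u) (0:R) (@RC_cont 0) (@cst_continuous _ _ u 0).
  move=> H.
  have E : ((0:R)%:C : C) * u = 0 by rewrite rmorph0 mul0r.
  rewrite -E. Timeout 20 exact: H.
have Hk : (fun h : R => (h%:C : C) * u) @ (0:R)^' --> (0:C)^'.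
  move=> P HP; move: (Hc _ HP); rewrite !nbhs_simpl /= => H.
  rewrite /dnbhs /within /=; move: H; apply: filterS => h /= H hn0; apply: H.
  apply: mulf_neq0 => //.
  by apply/negP => /eqP [] /eqP; apply/negP.
have H1 := cvg_comp _ _ Hk Hq.
have Hm := @continuousM C C (cst u) id ('D_1 F x) (@cst_continuous _ _ u _) cvg_id.
have H2 := cvg_comp _ _ Hm (@Lc (u * 'D_1 F x)).
have := cvg_comp _ _ H1 H2.
apply: cvg_trans; apply: near_eq_cvg; near=> h.
have hn0 : h != 0 by near: h; exact: nbhs_dnbhs_neq.
rewrite /=.
have E1 : a + (h *: 1 + s)%:C * u = (h%:C * u) *: 1 + x.
  rewrite /x /GRing.scale /= mulr1 raddfD /=; ring.
rewrite E1 /GRing.scale /= -/x.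
set D := F _ - F x.
have -> : u * ((h%:C * u)^-1 * D) = (h^-1)%:C * D.
  by rewrite invfM fmorphV mulrCA !mulrA mulfVK.
by rewrite LZ LB.
Unshelve. all: by end_near. Qed.

Lemma seg_in_ball (a u r : C) (y : R) : `|u| < r -> 0 <= y <= 1 ->
  ball a r (a + y%:C * u).
Proof.
move=> ur /andP[y0 y1]; rewrite /ball /= opprD addrA subrr add0r normrN normrM normC_real.
apply: le_lt_trans ur; apply: ler_piMl => //.
by rewrite -[1]/((1:R)%:C) lecR ger0_norm.
Qed.

Lemma seg_const (L : C -> R) (Lc : continuous L)
  (LB : forall z z', L (z - z') = L z - L z')
  (LZ : forall (h : R) z, L (h%:C * z) = h * L z)
  (F : C -> C) (a r b : C) :
  (forall z, ball a r z -> is_derive z (1:C) F 0) -> ball a r b -> L (F b) = L (F a).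
Proof.
move=> Hd Hb; set u := b - a.
have ur : `|u| < r by rewrite /u -normrN opprB; exact: Hb.
have L0 : L 0 = 0 by have := LB 0 0; rewrite subrr => ->; rewrite subrr.
pose g := fun y : R => L (F (a + y%:C * u)).
have gd (y : R) : 0 <= y <= 1 -> is_derive y (1:R) g 0.
  move=> hy; have [dF dF0] := Hd _ (@seg_in_ball a u r y ur hy).
  have := real_deriv Lc LB LZ dF; rewrite dF0 mulr0 L0; exact.
have H1 : forall y : R, y \in `]0, 1[ -> is_derive y (1:R) g ((fun _ => 0) y).
  move=> y; rewrite in_itv /= => /andP[y0 y1]; apply: gd.
  by rewrite !ltW.
have H2 : {within `[(0:R), 1], continuous g}.
  apply: continuous_in_subspaceT => y; rewrite inE /= in_itv /= => hy.
  have [dg _] := gd y hy.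
  exact/differentiable_continuous/derivable1_diffP.
have [c _] := @MVT R g (fun _ => 0) 0 1 ltr01 H1 H2.
rewrite mul0r => /eqP; rewrite subr_eq0 => /eqP.
by rewrite /g /u rmorph0 rmorph1 mul1r mul0r addr0 addrC subrK.
Qed.

Lemma ball_const (F : C -> C) (a r : C) :
  (forall z, ball a r z -> is_derive z (1:C) F 0) -> forall b, ball a r b -> F b = F a.
Proof.
move=> Hd b Hb.
have ReB : forall z z' : C, complex.Re (z - z') = complex.Re z - complex.Re z' by move=> [? ?] [? ?].
have ReZ : forall (h : R) (z : C), complex.Re (h%:C * z) = h * complex.Re z.
  by move=> h [p q] /=; rewrite mul0r subr0.
have ImB : forall z z' : C, complex.Im (z - z') = complex.Im z - complex.Im z' by move=> [? ?] [? ?].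
have ImZ : forall (h : R) (z : C), complex.Im (h%:C * z) = h * complex.Im z.
  by move=> h [p q] /=; rewrite mul0r addr0.
have hRe := @seg_const (fun z => complex.Re z) Re_cont ReB ReZ F a r b Hd Hb.
have hIm := @seg_const (fun z => complex.Im z) Im_cont ImB ImZ F a r b Hd Hb.
move: hRe hIm; case: (F b) => p q; case: (F a) => p' q' /= -> -> //.
Qed.

Lemma conn_const (D : set C) (H : C -> C) : open D -> connected D ->
  (forall t, D t -> is_derive t (1:C) H 0) -> forall t0 t, D t0 -> D t -> H t = H t0.
Proof.
move=> oD cD Hd t0 t Dt0 Dt.
have loc s : D s -> exists2 r : C, 0 < r & (forall s', ball s r s' -> D s' /\ H s' = H s).
  move=> Ds; have : nbhs s D by rewrite openE in oD; exact: oD.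
  move=> /nbhs_ballP [r r0 Hr]; exists r => // s' Hs'; split; first exact: Hr.
  apply: (ball_const (a := s) (r := r)) => // z Hz; apply: Hd; exact: Hr.
pose B := D `&` [set s | H s = H t0].
pose B' := D `&` [set s | H s != H t0].
have BD : B = D.
  apply: cD.
  - by exists t0; split.
  - exists B°; first exact: open_interior.
    apply/seteqP; split => s.
    + move=> [Ds Hs]; split => //.
      have [r r0 Hr] := loc s Ds.
      by apply/nbhs_ballP; exists r => // s' /Hr [Ds' Hs']; split => //=; rewrite Hs'.
    + by move=> [Ds /interior_subset].
  - exists (~` B'°); first by apply: open_closedC; exact: open_interior.
    apply/seteqP; split => s.
    + move=> [Ds Hs]; split => // /interior_subset [_] /=; rewrite Hs eqxx.
      done.
    + move=> [Ds Hs]; split => //=.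
      have [//|Hne] := eqVneq (H s) (H t0).
      exfalso; apply: Hs.
      have [r r0 Hr] := loc s Ds.
      by apply/nbhs_ballP; exists r => // s' /Hr [Ds' Hs']; split => //=; rewrite Hs'.
have : B t by rewrite BD.
by case.
Qed.
End Real.


Section Main.
Variables (R : realType) (n : nat).
Local Notation C := (CC R).
Local Notation zpoly := (mpoly.mpoly (n + n) C).

Lemma E_liftz (w x : 'rV[C]_n) (f : mpoly.mpoly n C) : E w (liftz f) x = heval f x.
Proof.
rewrite /E /liftz /heval /mpoly.mmap raddf_sum [RHS]mpoly.mevalE /=.
apply: eq_bigr => m _.
rewrite mpoly.mevalM mpoly.mevalC /mpoly.mmap1 rmorph_prod /=; congr (_ * _).
apply: eq_bigr => i _; rewrite rmorphXn /= mpoly.mevalXU /ev.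
by rewrite (unsplitK (inl _ i)).
Qed.

Lemma E_Qact (Q : 'I_n -> mpoly.mpoly n C) (w x : 'rV[C]_n) (P : zpoly) :
  E w (Qact Q P) x = \sum_(i < n) Qvec Q x ord0 i * E w (mpoly.mderiv (lshift n i) P) x.
Proof.
rewrite /E /Qact raddf_sum /=; apply: eq_bigr => i _.
by rewrite mpoly.mevalM /Qvec mxE; have := E_liftz w x (Q i); rewrite /E => ->.
Qed.

Lemma E_psig0 (m : 'I_n -> nat) (p : zpoly) (nu : R) (w : 'rV[C]_n) :
  no_pure_terms p -> E w (psig m p nu) 0 = 0.
Proof.
move=> np; rewrite /E /psig raddf_sum /= big_seq_cond; apply: big1 => AB /andP [Hin _].
rewrite mpoly.mevalZ mpoly.mevalX.
have [[i Hi] _] := np AB Hin.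
rewrite (bigD1 (lshift n i)) //= /ev (unsplitK (inl _ i)) mxE expr0n (negbTE Hi).
by rewrite mul0r mulr0.
Qed.

Lemma E_Qact0 (Q : 'I_n -> mpoly.mpoly n C) (w : 'rV[C]_n) (P : zpoly) :
  (forall j, heval (Q j) 0 = 0) -> E w (Qact Q P) 0 = 0.
Proof.
move=> Q0; rewrite E_Qact big1 // => i _.
by rewrite /Qvec mxE Q0 mul0r.
Qed.
End Main.

Theorem lemma2p3 (R : realType) (n : nat) (m : 'I_n -> nat)
    (p : mpoly.mpoly (n + n) (CC R)) (Q : 'I_n -> mpoly.mpoly n (CC R))
    (S : set 'rV[CC R]_n) (nu : R) (alpha : nat) :
  (forall j, (0 < m j)%N) ->
  real_poly p -> homogeneous_wt1 m p -> no_pure_terms p ->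
  weighted_homogeneous_vf m Q ->
  (forall j, heval (Q j) 0 = 0) ->
  Qorbit Q S -> nontrivial S -> closure S 0 ->
  (forall x, S x -> Qvec Q x != 0) ->
  (0 < alpha)%N ->
  iter alpha (Qact Q) (psig m p nu) = 0 ->
  forall z, S z -> zeval (psig m p nu) z = 0.
Proof.
move=> mpos preal hom npure Qhom Q0 [D [phi [[[oD cD D0 phid] _] SE]]] nontriv cl0 Qnz apos Hiter z.
rewrite SE in cl0 *; move=> [t0 Dt0 <-].
set w := phi t0.
pose P k := iter k (Qact Q) (psig m p nu).
have E0 : forall j, E w (P j) 0 = 0.
  by case => [|j']; [exact: E_psig0 | exact: E_Qact0].
have key : forall k, (k <= alpha)%N -> forall t, D t -> E w (P (alpha - k)%N) (phi t) = 0.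
  elim => [_ t Dt|k IH Hk t Dt].
    by rewrite subn0 /P Hiter /E mpoly.meval0.
  have Hk' : (k <= alpha)%N by exact: ltnW.
  have ES : (alpha - k)%N = (alpha - k.+1).+1 by rewrite subnSK.
  set j := (alpha - k.+1)%N.
  pose Hf := fun s => E w (P j) (phi s).
  have Hd : forall s, D s -> is_derive s (1:CC R) Hf 0.
    move=> s Ds.
    have := @Pr_all R n w phi s (Qvec Q (phi s)) (fun i => is_derive_coord i (phid s Ds)) (P j).
    rewrite /Pr /Dv -E_Qact.
    have -> : E w (Qact Q (P j)) (phi s) = 0 by have := IH Hk' s Ds; rewrite ES.
    done.
  have Hc : forall s, D s -> Hf s = Hf t.
    by move=> s Ds; exact: (@conn_const R D Hf oD cD Hd t s Dt Ds).
  have [//|cne] := eqVneq (Hf t) 0.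
  exfalso.
  have HN : nbhs (E w (P j) 0) [set y : CC R | y != Hf t].
    have cpos : 0 < `|Hf t| by rewrite normr_gt0.
    rewrite E0; apply/nbhs_ballP; exists `|Hf t|; first exact: cpos.
    move=> y; rewrite /ball /= sub0r normrN => hy; apply/eqP => heq.
    by rewrite heq ltxx in hy.
  have := @Pc_all R n w 0 (P j) _ HN.
  move=> /cl0 [y [[s Ds <-] /= Hy]].
  by move: Hy; rewrite -/(Hf s) Hc // eqxx.
have := key alpha (leqnn _) t0 Dt0; rewrite subnn /P /=.
done.
Qed.
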